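(* Let $e_1,\dots,e_m$ ($m\ge2$) be training domains, $\mathcal{F}$ a class of predictors, and for $f\in\mathcal{F}$ let $\mathcal{R}^{e_1}(f),\dots,\mathcal{R}^{e_m}(f)\in\mathbb{R}$ be its risks, with sample mean $\hat\mu_f=\frac1m\sum_{i=1}^m\mathcal{R}^{e_i}(f)$ and sample standard deviation $\hat\sigma_f=\big(\frac{1}{m-1}\sum_{i=1}^m(\mathcal{R}^{e_i}(f)-\hat\mu_f)^2\big)^{1/2}$. For $\alpha\in(0,1)$ let $\hat f_\alpha\in\arg\min_{f\in\mathcal{F}}\,\hat\mu_f+\Phi^{-1}(\alpha)\hat\sigma_f$ (assumed to exist), where $\Phi^{-1}$ is the standard normal quantile function. Assume 1. $\mathcal{F}$ contains an invariant-risk predictor $f_0$ with finite mean risk, i.e. $\hat\sigma_{f_0}=0$ and $\hat\mu_{f_0}<\infty$; and 2. $\mu_*:=\inf_{f\in\mathcal{F}}\hat\mu_f>-\infty$. Then $\lim_{\alpha\to1}\hat\sigma_{\hat f_\alpha}=0$ and $\limsup_{\alpha\to1}\hat\mu_{\hat f_\alpha}\le\hat\mu_{f_0}$.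
   Context: $\hat f_\alpha$ is the predictor minimizing the $\alpha$-quantile of the Gaussian distribution $\mathcal{N}(\hat\mu_f,\hat\sigma_f^2)$ fitted to the training-domain risks of $f$. *)

(* Defs.v *)
From HB Require Import structures.
From mathcomp Require Import all_boot all_order all_algebra.
From mathcomp Require Import all_classical all_reals all_analysis.
From mathcomp Require Import normal_distribution.
Set Implicit Arguments. Unset Strict Implicit. Unset Printing Implicit Defensive.
Import Order.TTheory GRing.Theory Num.Theory numFieldNormedType.Exports.
Local Open Scope classical_set_scope.
Local Open Scope ring_scope.

Section Defs.
Variable R : realType.

Definition std_normal_cdf (x : R) : R :=
  fine (normal_prob (0 : R) 1 `]-oo, x]).

(* standard normal quantile function Phi^{-1}(a) = inf {x | a <= Phi x}
   (generalized inverse; coincides with the inverse on (0,1)) *)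
Definition std_normal_quantile (a : R) : R :=
  inf [set x : R | a <= std_normal_cdf x].

Variable m : nat.

Definition sample_mean (r : 'I_m -> R) : R := (\sum_(i < m) r i) / m%:R.

Definition sample_sd (r : 'I_m -> R) : R :=
  Num.sqrt ((\sum_(i < m) (r i - sample_mean r) ^+ 2) / (m.-1)%:R).

End Defs.

(* Main.v *)
Require Import Defs.
From HB Require Import structures.
From mathcomp Require Import all_boot all_order all_algebra.
From mathcomp Require Import all_classical all_reals all_analysis normal_distribution measurable_realfun.
From mathcomp Require Import lra.
Import Order.TTheory GRing.Theory Num.Theory numFieldNormedType.Exports.
Local Open Scope classical_set_scope.
Local Open Scope ring_scope.
Section S.
Variable R : realType.
Local Notation P := (normal_prob (0:R) 1).
Lemma Pfin (A : set R) : measurable A -> (P A) \is a fin_num.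
Proof.
move=> mA; rewrite ge0_fin_numE ?measure_ge0//.
have := probability_le1 P mA.
move=> h; apply: (le_lt_trans h). exact: ltry.
Qed.

Lemma Phi_le (x y : R) : x <= y -> std_normal_cdf x <= std_normal_cdf y.
Proof.
move=> xy; rewrite /std_normal_cdf fine_le ?Pfin//.
apply: le_measure; rewrite ?inE//.
by move=> z /=; rewrite !in_itv/= => /le_trans; apply.
Qed.

Lemma Phi_lt1 (x : R) : std_normal_cdf x < 1.
Proof.
pose c : R := normal_peak 1 * expR (- ((`|x| + 1) ^+ 2)).
have c0 : 0 < c by rewrite mulr_gt0 ?normal_peak_gt0 ?oner_neq0 ?expR_gt0.
have h1 : (c%:E <= P `]x, (x + 1)%R])%E.
  have mD : measurable (`]x, (x + 1)%R] : set R) by [].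
  have -> : (c%:E = \int[lebesgue_measure]_(y in `]x, (x + 1)%R]) (cst c%:E y))%E.
    rewrite integral_cst//.
    have L : (lebesgue_measure (`]x, (x+1)%R] : set R) = 1)%E.
      by rewrite lebesgue_measure_itv/= lte_fin ltrDl ltr01 -EFinD addrAC subrr add0r.
    transitivity (c%:E * 1)%E; first by rewrite mule1.
    congr (_ * _)%E; symmetry; exact: L.
  apply: ge0_le_integral => //.
  - by move=> y _; rewrite lee_fin ltW.
  - apply/measurable_EFinP; apply: measurable_funTS; exact: measurable_normal_pdf.
  move=> y; rewrite /= in_itv/= => /andP[xy yx].
  rewrite lee_fin normal_pdfE ?oner_neq0// /c ler_wpM2l ?normal_peak_ge0//.
  rewrite /normal_fun ler_expR subr0 expr1n.
  have h1 : x <= `|x| by exact: ler_norm.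
  have h2 : - `|x| <= x by rewrite lerNl -normrN ler_norm.
  have h3 : 0 <= `|x| by [].
  set a := `|x| in h1 h2 h3 *.
  nra.
have h2 : (P `]x, (x + 1)%R] <= P (~` `]-oo, x]))%E.
  apply: le_measure; rewrite ?inE//; first exact: measurableC.
  by move=> y /=; rewrite !in_itv/= => /andP[xy _]; apply/negP; rewrite -ltNge.
have h3 : (P (~` `]-oo, x]) = 1 - P `]-oo, x])%E.
  exact: (probability_setC (normal_prob (0:R) 1) (measurable_itv `]-oo, x])).
rewrite h3 in h2.
have := le_trans h1 h2.
rewrite /std_normal_cdf -(fineK (@Pfin `]-oo, x] (measurable_itv _))) -EFinB lee_fin.
move=> h; apply: (le_lt_trans _ (_ : 1 - c < 1)); first by rewrite lerBrDl addrC -lerBrDl.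
by rewrite ltrBlDr ltrDl.
Qed.

Lemma Phi_near1 (a : R) : a < 1 -> exists x, a <= std_normal_cdf x.
Proof.
move=> a1.
pose F := fun n : nat => (`]-oo, n%:R]%classic : set R).
have mF : forall n, measurable (F n) by move=> n; exact: measurable_itv.
have UF : \bigcup_n F n = setT.
  apply/seteqP; split => // y _.
  exists (Num.Def.archi_bound `|y|) => //.
  rewrite /F /= in_itv /=; apply: ltW; apply: le_lt_trans (archi_boundP _) => //.
  exact: ler_norm.
have ndF : nondecreasing_seq F.
  move=> n k nk; apply/subsetPset => y; rewrite /F /= !in_itv /= => /le_trans; apply.
  by rewrite ler_nat.
have cu := @nondecreasing_cvg_mu _ _ _ P _ mF (ltac:(rewrite UF; exact: measurableT)) ndF.
have nd : nondecreasing_seq (P \o F).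
  move=> n k nk /=; apply: le_measure; [by rewrite inE; apply: mF|by rewrite inE; apply: mF|] => y; rewrite /F /= !in_itv /= => /le_trans; apply; by rewrite ler_nat.
have e : P (\bigcup_n F n) = ereal_sup (range (P \o F)).
  apply: (@cvg_unique _ _ (P \o F @ \oo)); [by [] | exact: cu | exact: ereal_nondecreasing_cvgn].
have : (a%:E < ereal_sup (range (P \o F)))%E.
  rewrite -e; apply: (lt_le_trans (_ : (a%:E < 1)%E)); first by rewrite lte_fin.
  rewrite UF le_eqVlt; apply/orP; left; apply/eqP; symmetry.
  exact: (probability_setT (normal_prob (0:R) 1)).
case/ereal_sup_gt => _ [n _ <-] /=.
rewrite -(fineK (@Pfin (F n) (mF n))) lte_fin => h.
by exists n%:R; apply: ltW.
Qed.

Lemma quantile_large (M : R) :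
  \forall a \near (1:R)^'-, (0 < a < 1) /\ M <= std_normal_quantile a.
Proof.
have hb := Phi_lt1 M.
near=> a.
have a1 : a < 1 by near: a; exact: nbhs_left_lt.
have ba : std_normal_cdf M < a by near: a; exact: nbhs_left_gt.
have a0 : 0 < a.
  apply: le_lt_trans ba; rewrite /std_normal_cdf fine_ge0 //; exact: measure_ge0.
split; first by rewrite a0 a1.
rewrite /std_normal_quantile; apply: lb_le_inf.
  by have [x hx] := @Phi_near1 a a1; exists x.
move=> x /= hx; rewrite leNgt; apply/negP => xM.
have := @Phi_le x M (ltW xM).
by rewrite leNgt (lt_le_trans ba hx).
Unshelve. all: by end_near.
Qed.
End S.

Theorem propositionA4 (R : realType) (m : nat) (F : Type)
  (risk : F -> 'I_m -> R) (fhat : R -> F) (f0 : F) :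
  (2 <= m)%N ->
  (* fhat a is a minimizer over F of mu_f + Phi^{-1}(a) sigma_f, for a in (0,1) *)
  (forall a : R, 0 < a < 1 -> forall f : F,
     sample_mean (risk (fhat a)) + std_normal_quantile a * sample_sd (risk (fhat a))
     <= sample_mean (risk f) + std_normal_quantile a * sample_sd (risk f)) ->
  (* 1. f0 has invariant risk *)
  sample_sd (risk f0) = 0 ->
  (* 2. mu_* = inf_f mu_f > -oo *)
  (ereal_inf [set (sample_mean (risk f))%:E | f in [set: F]] > -oo)%E ->
  ((fun a : R => sample_sd (risk (fhat a))) @ (1 : R)^'- --> (0 : R)) /\
  (limf_esup (fun a : R => (sample_mean (risk (fhat a)))%:E) (1 : R)^'-
     <= (sample_mean (risk f0))%:E)%E.
Proof.
move=> m2 hmin sd0 hinf.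
set mu := fun f => sample_mean (risk f).
set sd := fun f => sample_sd (risk f).
have [L hL] : exists L, forall f, L <= mu f.
  set S := [set _ | _ in _] in hinf.
  have lb : forall f, (ereal_inf S <= (mu f)%:E)%E.
    by move=> f; apply: ereal_inf_lbound; exists f.
  move: lb hinf; case: (ereal_inf S) => [r| |] lb hinf.
  - by exists r => f; rewrite -lee_fin lb.
  - by have := lb f0; rewrite leye_eq.
  - by rewrite ltxx in hinf.
have key : forall a : R, 0 < a < 1 ->
    mu (fhat a) + std_normal_quantile a * sd (fhat a) <= mu f0.
  move=> a ha; have := hmin a ha f0.
  by rewrite -/(sd f0) [sd f0]sd0 mulr0 addr0.
have sdge0 : forall f, 0 <= sd f by move=> f; exact: sqrtr_ge0.
set D := mu f0 - L.
have D0 : 0 <= D by rewrite subr_ge0.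
split.
  apply/cvgrPdist_le => e e0.
  pose M := (D + 1) / e.
  have eM : M * e = D + 1 by rewrite /M mulfVK ?gt_eqF.
  have M0 : 0 <= M by rewrite /M divr_ge0 // ?ltW //; lra.
  near=> a.
  have [ha Mq] : (0 < a < 1) /\ M <= std_normal_quantile a.
    by near: a; exact: quantile_large.
  have h1 := key a ha.
  have h2 := hL (fhat a).
  have h3 := sdge0 (fhat a).
  rewrite sub0r normrN ger0_norm //.
  have h4 : sd (fhat a) * M <= D.
    apply: le_trans (_ : std_normal_quantile a * sd (fhat a) <= D).
      by rewrite mulrC ler_wpM2r.
    rewrite /D; lra.
  have h5 : sd (fhat a) * (D + 1) <= D * e.
    by rewrite -eM mulrA ler_wpM2r // ltW.
  rewrite leNgt; apply/negP => hlt.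
  have : e * (D + 1) < sd (fhat a) * (D + 1) by rewrite ltr_pM2r //; lra.
  lra.
have [V [hV hVp]] : exists V, (1:R)^'- V /\
    (forall a, V a -> (0 < a < 1) /\ 0 <= std_normal_quantile a).
  by exists [set a | (0 < a < 1) /\ 0 <= std_normal_quantile a]; split => //;
     exact: quantile_large.
rewrite limf_esupE.
apply: le_trans (ereal_inf_lbound _) _; first by exists V.
apply: ub_ereal_sup => _ [a Va <-]; rewrite lee_fin.
have [ha q0] := hVp a Va.
have h1 := key a ha.
have := mulr_ge0 q0 (sdge0 (fhat a)).
rewrite /mu in h1 *; lra.
Unshelve. all: by end_near.
Qed.
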